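(* Let $b>0$ and $c>0$, and let $A(b,c)>0$ and $B(b,c)>0$ be defined by $2A(b,c)^2=\sqrt{b^4+c^2}+b^2$ and $2B(b,c)^2=\sqrt{b^4+c^2}-b^2$. Then $$\sum_{n\ge1}\chi(n)\frac{n}{(n^2+b^2)^2+c^2}=\frac{\pi}{4c}\,\frac{\sinh(\frac{\pi}{2}A(b,c))\sin(\frac{\pi}{2}B(b,c))}{\sinh^2(\frac{\pi}{2} A(b,c))+\cos^{2}(\frac{\pi}{2}B(b,c))},$$ $$\sum_{n\ge1}\chi(n)\frac{n(n^2+b^2)}{(n^2+b^2)^2+c^2}=\frac{\pi}{4}\,\frac{\cosh(\frac{\pi}{2}A(b,c))\cos(\frac{\pi}{2}B(b,c))}{\cosh^2(\frac{\pi}{2} A(b,c))-\sin^{2}(\frac{\pi}{2}B(b,c))}.$$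
   Context: The function $\chi$ on integers is $\chi(n)=0$ if $n$ is even, $\chi(n)=1$ if $n\equiv1\pmod 4$, and $\chi(n)=-1$ if $n\equiv 3\pmod 4$. *)

(* Defs.v *)
From Stdlib Require Import Reals.
From Coquelicot Require Import Coquelicot.
Open Scope R_scope.

Definition chi (n : nat) : R :=
  match (n mod 4)%nat with
  | 1%nat => 1
  | 3%nat => -1
  | _ => 0
  end.

Definition Abc (b c : R) : R := sqrt ((sqrt (b ^ 4 + c ^ 2) + b ^ 2) / 2).
Definition Bbc (b c : R) : R := sqrt ((sqrt (b ^ 4 + c ^ 2) - b ^ 2) / 2).

(* Main.v *)
Require Import Defs.
From Stdlib Require Import Reals Lra Lia Psatz Arith.
From Coquelicot Require Import Coquelicot.
Open Scope R_scope.

Lemma ball_R (x : R) (e : posreal) y : ball x e y <-> Rabs (y - x) < e.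
Proof. split; intros H; exact H. Qed.

Definition kfun (f : R -> R) (d0 : R) (s : R) : R :=
  if Req_EM_T s 0 then d0 else (f s - f 0) / sin s.

Lemma diffquot_lim (f : R -> R) (l : R) :
  is_derive f 0 l -> is_lim (fun s => (f s - f 0) / s) 0 l.
Proof.
  intros H. apply is_derive_Reals in H.
  apply is_lim_spec. intros eps.
  destruct (H eps (cond_pos eps)) as [d Hd].
  exists d. intros y Hy Hy0.
  assert (Hy2 : Rabs (y - 0) < d) by exact Hy. rewrite Rminus_0_r in Hy2. clear Hy. rename Hy2 into Hy. specialize (Hd y Hy0 Hy).
  rewrite Rplus_0_l in Hd. exact Hd.
Qed.

Lemma kfun_cont0 (f f1 : R -> R) :
  (forall x, is_derive f x (f1 x)) -> continuity_pt (kfun f (f1 0)) 0.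
Proof.
  intros Hd.
  apply continuity_pt_filterlim'.
  assert (Hk0 : kfun f (f1 0) 0 = f1 0).
  { unfold kfun. destruct (Req_EM_T 0 0); [reflexivity| congruence]. }
  rewrite Hk0.
  assert (H1 := diffquot_lim f (f1 0) (Hd 0)).
  assert (H2 := diffquot_lim sin (cos 0) (is_derive_sin 0)).
  rewrite cos_0 in H2. rewrite sin_0 in H2.
  assert (H2' : is_lim (fun s => sin s / s) 0 1).
  { eapply is_lim_ext_loc; [|exact H2]. apply filter_forall. intros x; simpl; lra. }
  assert (H3 := is_lim_div _ _ 0 _ _ H1 H2').
  assert (H4 : is_lim (fun y => (f y - f 0) / y / (sin y / y)) 0 (f1 0)).
  { replace (Finite (f1 0)) with (Rbar_div (f1 0) 1).
    apply H3. simpl; intro H; injection H; lra. simpl; exact I.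
    simpl. f_equal. field. }
  eapply is_lim_ext_loc in H4.
  exact H4.
  simpl. exists (mkposreal 1 Rlt_0_1). intros y _ Hy.
  unfold kfun. destruct (Req_EM_T y 0) as [e|e]; [congruence|].
  assert (Hs : sin y <> 0 \/ sin y = 0) by (destruct (Req_EM_T (sin y) 0); auto).
  destruct Hs as [Hs|Hs].
  - field; auto.
  - rewrite Hs. unfold Rdiv. rewrite Rmult_0_l, Rinv_0, !Rmult_0_r. reflexivity.
Qed.

Ltac Rring := match goal with |- @eq _ ?a ?b => change (@eq R a b); cbv beta; ring end.
Ltac Rfield := match goal with |- @eq _ ?a ?b => change (@eq R a b); cbv beta; field end.

Lemma dR_plus (f g : R -> R) x a b : is_derive f x a -> is_derive g x b ->
  is_derive (fun t => f t + g t) x (a + b).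
Proof. intros H1 H2. exact (is_derive_plus f g x a b H1 H2). Qed.
Lemma dR_minus (f g : R -> R) x a b : is_derive f x a -> is_derive g x b ->
  is_derive (fun t => f t - g t) x (a - b).
Proof. intros H1 H2. exact (is_derive_minus f g x a b H1 H2). Qed.
Lemma dR_mult (f g : R -> R) x a b : is_derive f x a -> is_derive g x b ->
  is_derive (fun t => f t * g t) x (a * g x + f x * b).
Proof. intros H1 H2. exact (is_derive_mult f g x a b H1 H2 Rmult_comm). Qed.
Lemma dR_const (c x : R) : is_derive (fun _ => c) x 0.
Proof. exact (is_derive_const c x). Qed.
Lemma dR_eq (f : R -> R) x a b : is_derive f x a -> a = b -> is_derive f x b.
Proof. intros H ->; exact H. Qed.
Lemma dR_id x : is_derive (fun t : R => t) x 1.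
Proof. exact (is_derive_id x). Qed.
Lemma dR_lin (f : R -> R) df (c x : R) : (forall y, is_derive f y (df y)) ->
  is_derive (fun t => f (c * t)) x (c * df (c * x)).
Proof.
  intros H. apply (dR_eq _ _ (scal c (df (c*x)))).
  - apply (is_derive_comp f (fun t => c * t) x (df (c * x)) c (H _)).
    apply dR_eq with (c * 1). apply (is_derive_scal (fun t => t)). exact (dR_id x). apply Rmult_1_r.
  - reflexivity.
Qed.
Lemma dR_sinh y : is_derive sinh y (cosh y).
Proof. apply is_derive_Reals, derivable_pt_lim_sinh. Qed.
Lemma dR_cosh y : is_derive cosh y (sinh y).
Proof. apply is_derive_Reals, derivable_pt_lim_cosh. Qed.
Lemma dR_cos y : is_derive cos y (- sin y).
Proof. exact (is_derive_cos y). Qed.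
Lemma dR_sin y : is_derive sin y (cos y).
Proof. exact (is_derive_sin y). Qed.

Lemma kfun_derive (f f1 : R -> R) x :
  (forall x, is_derive f x (f1 x)) -> 0 < x < PI ->
  is_derive (kfun f (f1 0)) x ((f1 x * sin x - (f x - f 0) * cos x) / (sin x)^2).
Proof.
  intros Hd Hx.
  assert (Hs : sin x <> 0) by (apply Rgt_not_eq, sin_gt_0; lra).
  apply is_derive_ext_loc with (fun t => (f t - f 0) / sin t).
  - exists (mkposreal x (proj1 Hx)). intros y Hy.
    assert (Hy2 : Rabs (y - x) < x) by exact Hy.
    unfold kfun. destruct (Req_EM_T y 0) as [e|e]; [|reflexivity].
    subst y. rewrite Rminus_0_l, Rabs_Ropp, Rabs_right in Hy2; lra.
  - apply dR_eq with (((f1 x - 0) * sin x - (f x - f 0) * cos x) / sin x ^ 2).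
    apply (is_derive_div (fun t => f t - f 0) sin x (f1 x - 0) (cos x)); auto. apply dR_minus. apply Hd. apply dR_const. apply dR_sin.
    simpl. field. auto.
Qed.

Lemma kfun_cont (f f1 : R -> R) x :
  (forall x, is_derive f x (f1 x)) -> 0 <= x < PI -> continuity_pt (kfun f (f1 0)) x.
Proof.
  intros Hd Hx. destruct (Req_EM_T x 0) as [e|e].
  - subst. apply kfun_cont0; auto.
  - apply continuity_pt_filterlim. apply (ex_derive_continuous (kfun f (f1 0)) x).
    eexists. apply kfun_derive; auto. lra.
Qed.

Lemma phi_bound (f f1 f2 : R -> R) (M x : R) :
  (forall x, is_derive f x (f1 x)) -> (forall x, is_derive f1 x (f2 x)) ->
  (forall s, 0 <= s <= PI/2 -> Rabs (f2 s + f s - f 0) <= M) ->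
  0 < x <= PI/2 ->
  Rabs (f1 x * sin x - (f x - f 0) * cos x) <= M * (1 - cos x).
Proof.
  intros H1 H2 HM Hx.
  set (phi := fun s => f1 s * sin s - (f s - f 0) * cos s).
  set (G := fun s => 1 - cos s).
  assert (Hphi : forall s, is_derive phi s ((f2 s + f s - f 0) * sin s)).
  { intros s. unfold phi. eapply dR_eq.
    apply dR_minus. apply dR_mult. apply H2. apply dR_sin.
    apply dR_mult. apply dR_minus. apply H1. apply dR_const. apply dR_cos.
    Rring. }
  assert (HG : forall s, is_derive G s (sin s)).
  { intros s. unfold G. eapply dR_eq. apply dR_minus. apply dR_const. apply dR_cos. Rring. }
  assert (pr1 : forall c, 0 < c < x -> derivable_pt phi c).
  { intros c _. exists ((f2 c + f c - f 0) * sin c). apply is_derive_Reals, Hphi. }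
  assert (pr2 : forall c, 0 < c < x -> derivable_pt G c).
  { intros c _. exists (sin c). apply is_derive_Reals, HG. }
  destruct (MVT phi G 0 x pr1 pr2 (proj1 Hx)) as [c [Pc Hc]].
  - intros c _. apply continuity_pt_filterlim, (ex_derive_continuous phi c). eexists; apply Hphi.
  - intros c _. apply continuity_pt_filterlim, (ex_derive_continuous G c). eexists; apply HG.
  - rewrite (derive_pt_eq_0 _ _ _ _ (proj1 (is_derive_Reals _ _ _) (Hphi c))) in Hc.
    rewrite (derive_pt_eq_0 _ _ _ _ (proj1 (is_derive_Reals _ _ _) (HG c))) in Hc.
    assert (Hsc : 0 < sin c) by (apply sin_gt_0; lra).
    assert (Hphi0 : phi 0 = 0) by (unfold phi; rewrite sin_0, cos_0; ring).
    rewrite Hphi0 in Hc. unfold G in Hc. rewrite cos_0 in Hc.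
    assert (E : phi x = (1 - cos x) * (f2 c + f c - f 0)).
    { apply Rmult_eq_reg_r with (sin c); [|lra]. replace (phi x * sin c) with ((phi x - 0) * sin c) by ring. rewrite <- Hc. ring. }
    change (Rabs (phi x) <= M * (1 - cos x)). rewrite E.
    assert (Hcx : cos x <= 1) by apply COS_bound.
    rewrite Rabs_mult, (Rabs_right (1 - cos x)) by lra.
    rewrite Rmult_comm. apply Rmult_le_compat_r. lra. apply HM. lra.
Qed.

Definition dk (f f1 : R -> R) (y : R) :=
  (f1 y * sin y - (f y - f 0) * cos y) / (sin y)^2.

Lemma dk_bound (f f1 f2 : R -> R) (M y : R) :
  (forall x, is_derive f x (f1 x)) -> (forall x, is_derive f1 x (f2 x)) ->
  (forall s, 0 <= s <= PI/2 -> Rabs (f2 s + f s - f 0) <= M) ->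
  0 <= y <= PI/2 -> Rabs (dk f f1 y) <= M.
Proof.
  intros H1 H2 HM Hy.
  assert (HM0 : 0 <= M) by (eapply Rle_trans; [apply Rabs_pos| apply (HM 0)]; lra).
  destruct (Req_EM_T y 0) as [e|e].
  - subst. unfold dk. rewrite sin_0, cos_0. replace ((f1 0 * 0 - (f 0 - f 0) * 1) / 0 ^ 2) with 0. rewrite Rabs_R0. exact HM0. unfold Rdiv. simpl. rewrite Rmult_0_l, Rinv_0. ring.
  - assert (Hy' : 0 < y <= PI/2) by lra.
    assert (B := phi_bound f f1 f2 M y H1 H2 HM Hy').
    assert (Hs : 0 < sin y) by (apply sin_gt_0; lra).
    assert (Hc : 0 <= cos y) by (apply cos_ge_0; lra).
    assert (Hc1 : cos y <= 1) by apply COS_bound.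
    unfold dk. unfold Rdiv. rewrite Rabs_mult, (Rabs_right (/ _)).
    2: { apply Rle_ge, Rlt_le, Rinv_0_lt_compat. simpl. nra. }
    apply Rle_trans with (M * (1 - cos y) * / sin y ^ 2).
    apply Rmult_le_compat_r; [apply Rlt_le, Rinv_0_lt_compat; simpl; nra| exact B].
    assert (Hsq : sin y ^ 2 = (1 - cos y) * (1 + cos y)).
    { assert (T := sin2_cos2 y). unfold Rsqr in T. simpl. nra. }
    rewrite Hsq.
    destruct (Req_EM_T (cos y) 1) as [e1|e1].
    + rewrite e1. replace (1 - 1) with 0 by ring. rewrite !Rmult_0_r, Rmult_0_l. exact HM0.
    + assert (0 < 1 - cos y) by lra.
      replace (M * (1 - cos y) * / ((1 - cos y) * (1 + cos y))) with (M / (1 + cos y)) by (field; lra).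
      apply Rmult_le_reg_r with (1 + cos y); [lra|].
      unfold Rdiv. rewrite Rmult_assoc, Rinv_l by lra. nra.
Qed.

Lemma kfun_lip (f f1 f2 : R -> R) (M : R) :
  (forall x, is_derive f x (f1 x)) -> (forall x, is_derive f1 x (f2 x)) ->
  (forall s, 0 <= s <= PI/2 -> Rabs (f2 s + f s - f 0) <= M) ->
  forall u v, 0 <= u <= PI/2 -> 0 <= v <= PI/2 ->
  Rabs (kfun f (f1 0) u - kfun f (f1 0) v) <= M * Rabs (u - v).
Proof.
  intros H1 H2 HM u v Hu Hv.
  destruct (MVT_gen (kfun f (f1 0)) v u (dk f f1)) as [c [Hc E]].
  - intros x Hx. apply kfun_derive; auto.
    split. apply Rle_lt_trans with (Rmin v u). apply Rmin_glb; lra. apply Hx.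
    apply Rlt_le_trans with (PI/2). apply Rlt_le_trans with (Rmax v u). apply Hx. apply Rmax_lub; lra.
    assert (Hpi := PI_RGT_0). lra.
  - intros x Hx. apply kfun_cont; auto.
    split. apply Rle_trans with (Rmin v u). apply Rmin_glb; lra. apply Hx.
    apply Rle_lt_trans with (PI/2). apply Rle_trans with (Rmax v u). apply Hx. apply Rmax_lub; lra.
    assert (Hpi := PI_RGT_0). lra.
  - rewrite E, Rabs_mult. apply Rmult_le_compat_r. apply Rabs_pos.
    apply (dk_bound f f1 f2); auto.
    split. apply Rle_trans with (Rmin v u). apply Rmin_glb; lra. apply Hc.
    apply Rle_trans with (Rmax v u). apply Hc. apply Rmax_lub; lra.
Qed.

Lemma cR_mult (f g : R -> R) x : continuous f x -> continuous g x ->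
  continuous (fun t => f t * g t) x.
Proof. intros H1 H2. exact (continuous_mult f g x H1 H2). Qed.
Lemma cR_minus (f g : R -> R) x : continuous f x -> continuous g x ->
  continuous (fun t => f t - g t) x.
Proof. intros H1 H2. exact (continuous_minus f g x H1 H2). Qed.
Lemma cR_shift (f : R -> R) (h x : R) : continuous f (x - h) ->
  continuous (fun t => f (t - h)) x.
Proof.
  intros H. apply (continuous_comp (fun t => t - h) f x); auto.
  apply cR_minus. apply continuous_id. apply continuous_const.
Qed.

Lemma RL_shift (k w : R -> R) (a L K h : R) :
  0 < h <= a ->
  (forall s, w (s + h) = - w s) -> (forall s, Rabs (w s) <= 1) ->
  (forall s, continuous w s) ->
  (forall s, 0 <= s <= a -> continuous k s) ->
  (forall u v, 0 <= u <= a -> 0 <= v <= a -> Rabs (k u - k v) <= L * Rabs (u - v)) ->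
  (forall u, 0 <= u <= a -> Rabs (k u) <= K) ->
  Rabs (RInt (fun s => k s * w s) 0 a) <= (2 * K + L * a) * h / 2.
Proof.
  intros Hh Hw Hw1 Hwc Hkc HL HK.
  set (G := fun s => k s * w s).
  set (F := fun u => k (u - h) * w u).
  assert (cG : forall s, 0 <= s <= a -> continuous G s).
  { intros s Hs. apply cR_mult; auto. }
  assert (cF : forall s, h <= s <= a + h -> continuous F s).
  { intros s Hs. apply cR_mult; auto. apply cR_shift, Hkc. lra. }
  assert (exG : forall x y, 0 <= x <= y -> y <= a -> ex_RInt G x y).
  { intros x y Hxy Hy. apply (@ex_RInt_continuous R_CompleteNormedModule). intros z Hz. apply cG.
    rewrite Rmin_left, Rmax_right in Hz; lra. }
  assert (exF : forall x y, h <= x <= y -> y <= a + h -> ex_RInt F x y).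
  { intros x y Hxy Hy. apply (@ex_RInt_continuous R_CompleteNormedModule). intros z Hz. apply cF.
    rewrite Rmin_left, Rmax_right in Hz; lra. }
  assert (E1 : RInt F h (a + h) = - RInt G 0 a).
  { assert (T := RInt_comp_lin F 1 h 0 a).
    replace (1 * 0 + h) with h in T by ring. replace (1 * a + h) with (a + h) in T by ring.
    rewrite <- T by (apply exF; lra).
    change (- RInt G 0 a) with (opp (RInt G 0 a)).
    rewrite <- (RInt_opp G 0 a) by (apply exG; lra).
    apply RInt_ext. intros x _. unfold F, G. change (1 * (k (1 * x + h - h) * w (1 * x + h)) = - (k x * w x)).
    rewrite Rmult_1_l. replace (1 * x + h - h) with x by ring. replace (1 * x + h) with (x + h) by ring.
    rewrite Hw. ring. }
  assert (E2 : RInt G 0 a = RInt G 0 h + RInt G h a).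
  { symmetry. apply (RInt_Chasles G 0 h a); apply exG; lra. }
  assert (E3 : RInt F h (a + h) = RInt F h a + RInt F a (a + h)).
  { symmetry. apply (RInt_Chasles F h a (a + h)); apply exF; lra. }
  assert (E4 : RInt G h a - RInt F h a = RInt (fun s => G s - F s) h a).
  { symmetry. apply (RInt_minus G F h a). apply exG; lra. apply exF; lra. }
  assert (B1 : Rabs (RInt G 0 h) <= (h - 0) * K).
  { apply abs_RInt_le_const. lra. apply exG; lra. intros t Ht. unfold G.
    rewrite Rabs_mult. rewrite <- (Rmult_1_r K). apply Rmult_le_compat; auto using Rabs_pos.
    apply HK; lra. }
  assert (B2 : Rabs (RInt F a (a + h)) <= (a + h - a) * K).
  { apply abs_RInt_le_const. lra. apply exF; lra. intros t Ht. unfold F.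
    rewrite Rabs_mult. rewrite <- (Rmult_1_r K). apply Rmult_le_compat; auto using Rabs_pos.
    apply HK; lra. }
  assert (B3 : Rabs (RInt (fun s => G s - F s) h a) <= (a - h) * (L * h)).
  { apply abs_RInt_le_const. lra.
    apply (ex_RInt_minus G F). apply exG; lra. apply exF; lra.
    intros t Ht. unfold F, G.
    replace (k t * w t - k (t - h) * w t) with ((k t - k (t - h)) * w t) by ring.
    rewrite Rabs_mult. rewrite <- (Rmult_1_r (L * h)). apply Rmult_le_compat; auto using Rabs_pos.
    replace h with (Rabs (t - (t - h))) at 2 by (rewrite Rabs_right; lra).
    apply HL; lra. }
  assert (HK0 : 0 <= K) by (eapply Rle_trans; [apply Rabs_pos| apply (HK 0)]; lra).
  assert (HL0 : 0 <= L * h).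
  { assert (T := HL h 0 ltac:(lra) ltac:(lra)). rewrite Rminus_0_r, (Rabs_right h) in T by lra.
    apply Rle_trans with (Rabs (k h - k 0)); auto. apply Rabs_pos. }
  assert (Hj : 2 * RInt G 0 a = RInt G 0 h + (RInt G h a - RInt F h a) - RInt F a (a + h)).
  { assert (T : RInt G 0 a = - RInt F h (a+h)) by lra. rewrite E3 in T. lra. }
  rewrite E4 in Hj. fold G.
  apply Rmult_le_reg_l with 2. lra.
  rewrite <- (Rabs_right 2) at 1 by lra. rewrite <- Rabs_mult, Hj.
  eapply Rle_trans. apply Rabs_triang.
  eapply Rle_trans. apply Rplus_le_compat_r. apply Rabs_triang.
  rewrite Rabs_Ropp.
  apply Rle_trans with ((h - 0) * K + (a - h) * (L * h) + (a + h - a) * K). lra.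
  nra.
Qed.

Lemma odd_half_eq (j : nat) : INR (2 * S j + 1) * (PI / 2) = INR (2 * j + 1) * (PI / 2) + PI.
Proof. replace (2 * S j + 1)%nat with (2*j+1+2)%nat by lia. rewrite plus_INR. replace (INR 2) with 2 by (simpl; ring). field. Qed.

Lemma sin_odd_half (j : nat) : sin (INR (2 * j + 1) * (PI / 2)) = (-1) ^ j.
Proof.
  induction j.
  - simpl. rewrite Rmult_1_l. rewrite sin_PI2. ring.
  - rewrite odd_half_eq, neg_sin, IHj. simpl. ring.
Qed.

Lemma cos_odd_half (j : nat) : cos (INR (2 * j + 1) * (PI / 2)) = 0.
Proof.
  induction j.
  - simpl. rewrite Rmult_1_l. apply cos_PI2.
  - rewrite odd_half_eq, neg_cos, IHj. ring.
Qed.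

Lemma cont_of_der (g dg : R -> R) x : (forall s, is_derive g s (dg s)) -> continuous g x.
Proof. intros H. apply (ex_derive_continuous g x). eexists. apply H. Qed.

Lemma dR_sin_lin (c s : R) : is_derive (fun t => sin (c * t)) s (c * cos (c * s)).
Proof. apply (dR_lin sin cos). apply dR_sin. Qed.
Lemma dR_cos_lin (c s : R) : is_derive (fun t => cos (c * t)) s (c * - sin (c * s)).
Proof. apply (dR_lin cos (fun y => - sin y)). apply dR_cos. Qed.

Lemma int_cos_odd (j : nat) :
  is_RInt (fun s => cos (INR (2 * j + 1) * s)) 0 (PI / 2) ((-1) ^ j / INR (2 * j + 1)).
Proof.
  set (n := INR (2 * j + 1)).
  assert (Hn : 0 < n) by (unfold n; apply lt_0_INR; lia).
  assert (T : is_RInt (fun s => cos (n * s)) 0 (PI/2)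
               (minus (sin (n * (PI/2)) / n) (sin (n * 0) / n))).
  { apply (is_RInt_derive (fun s => sin (n * s) / n)).
    - intros x _. eapply dR_eq. apply (is_derive_div (fun t => sin (n * t)) (fun _ => n) x (n * cos (n * x)) 0).
      apply dR_sin_lin. apply dR_const. lra. simpl. field. lra.
    - intros x _. apply (cont_of_der _ (fun s => n * - sin (n * s))). intros s. apply dR_cos_lin. }
  replace ((-1) ^ j / n) with (minus (sin (n * (PI/2)) / n) (sin (n * 0) / n)). exact T.
  unfold n. rewrite sin_odd_half, Rmult_0_r, sin_0. change ((-1) ^ j / INR (2 * j + 1) - 0 / INR (2 * j + 1) = (-1) ^ j / INR (2 * j + 1)). field. unfold n in Hn; lra.
Qed.

Lemma Leibniz_lim : is_lim_seq (fun N => sum_n (fun j => (-1)^j / INR (2*j+1)) N) (PI/4).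
Proof.
  assert (H := Alt_PI_eq). unfold Alt_PI in H.
  destruct exist_PI as [l Hl].
  replace (PI/4) with l by lra.
  apply is_lim_seq_Reals in Hl.
  eapply is_lim_seq_ext; [|exact Hl]. intros N. simpl.
  rewrite sum_n_Reals. reflexivity.
Qed.

Lemma INR_2S (j : nat) : INR (2 * S j) = INR (2 * j + 1) + 1.
Proof. replace (2 * S j)%nat with (2 * j + 1 + 1)%nat by lia. rewrite plus_INR. reflexivity. Qed.
Lemma INR_2S' (j : nat) : INR (2 * j) = INR (2 * j + 1) - 1.
Proof. rewrite plus_INR. simpl. ring. Qed.

Definition coef (f : R -> R) (j : nat) :=
  RInt (fun s => f s * cos (INR (2 * j + 1) * s)) 0 (PI / 2).

Lemma cR_plus (f g : R -> R) x : continuous f x -> continuous g x ->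
  continuous (fun t => f t + g t) x.
Proof. intros H1 H2. exact (continuous_plus f g x H1 H2). Qed.

Lemma inv_S_lim : is_lim_seq (fun N => / INR (S N)) 0.
Proof.
  apply (is_lim_seq_incr_1 (fun n => / INR n)).
  replace (Finite 0) with (Rbar_inv p_infty) by reflexivity.
  apply is_lim_seq_inv. apply is_lim_seq_INR. discriminate.
Qed.

Lemma mainK (f f1 f2 : R -> R) :
  (forall x, is_derive f x (f1 x)) -> (forall x, is_derive f1 x (f2 x)) ->
  (forall x, continuous f2 x) ->
  is_lim_seq (fun N => 4 / PI * sum_n (coef f) N) (f 0).
Proof.
  intros H1 H2 H3.
  assert (Hpi := PI_RGT_0).
  set (a := PI/2).
  assert (Ha : 0 < a) by (unfold a; lra).
  destruct (continuity_ab_maj (fun s => Rabs (f2 s + f s - f 0)) 0 a) as [Mx [HMx _]].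
  lra.
  { intros c _. apply continuity_pt_filterlim.
    apply (continuous_comp (fun s => f2 s + f s - f 0) Rabs).
    apply cR_minus. apply cR_plus. apply H3. apply (cont_of_der f f1). auto.
    apply continuous_const. apply continuous_Rabs. }
  set (M := Rabs (f2 Mx + f Mx - f 0)).
  assert (HM : forall s, 0 <= s <= PI/2 -> Rabs (f2 s + f s - f 0) <= M) by (intros; apply HMx; auto).
  set (k := kfun f (f1 0)).
  assert (HL := kfun_lip f f1 f2 M H1 H2 HM). fold k in HL.
  assert (HK : forall u, 0 <= u <= a -> Rabs (k u) <= Rabs (k 0) + M * a).
  { intros u Hu. assert (T := HL u 0 Hu ltac:(unfold a; lra)).
    rewrite Rminus_0_r, (Rabs_right u) in T by lra.
    assert (T2 := Rabs_triang (k u - k 0) (k 0)). replace (k u - k 0 + k 0) with (k u) in T2 by ring.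
    assert (HM0 : 0 <= M) by apply Rabs_pos. nra. }
  assert (Hkc : forall s, 0 <= s <= a -> continuous k s).
  { intros s Hs. apply continuity_pt_filterlim. apply kfun_cont; auto. unfold a in Hs; lra. }
  set (Rm := (fun m : nat => RInt (fun s => k s * sin (INR (2 * m) * s)) 0 a) : nat -> R).
  assert (HRex : forall m : nat, ex_RInt (fun s => k s * sin (INR (2 * m) * s)) 0 a).
  { intros m. apply (@ex_RInt_continuous R_CompleteNormedModule). intros z Hz.
    rewrite Rmin_left, Rmax_right in Hz by lra.
    apply cR_mult. apply Hkc; lra. apply (cont_of_der _ _ z (dR_sin_lin _)). }
  assert (C1 : forall j, coef f j = f 0 * ((-1)^j / INR (2*j+1)) + (Rm (S j) - Rm j) / 2).
  { intros j. unfold coef.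
    assert (T1 := is_RInt_scal _ _ _ (f 0) _ (int_cos_odd j)).
    assert (T2 := is_RInt_minus _ _ _ _ _ _ (RInt_correct _ _ _ (HRex (S j))) (RInt_correct _ _ _ (HRex j))).
    assert (T3 := is_RInt_scal _ _ _ (/2) _ T2).
    assert (T4 := is_RInt_plus _ _ _ _ _ _ T1 T3).
    apply (@is_RInt_unique R_CompleteNormedModule) in T4.
    - change (RInt (fun y => f 0 * cos (INR (2 * j + 1) * y) +
          / 2 * (k y * sin (INR (2 * S j) * y) - k y * sin (INR (2 * j) * y))) 0 (PI/2) =
          f 0 * ((-1) ^ j / INR (2 * j + 1)) + / 2 * (Rm (S j) - Rm j)) in T4.
      rewrite (RInt_ext (fun y => f 0 * cos (INR (2 * j + 1) * y) +
          / 2 * (k y * sin (INR (2 * S j) * y) - k y * sin (INR (2 * j) * y)))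
          (fun s => f s * cos (INR (2 * j + 1) * s))) in T4.
      rewrite T4. Rfield.
      apply not_0_INR; lia.
      intros x Hx. symmetry. rewrite Rmin_left, Rmax_right in Hx by lra.
      assert (Hs : 0 < sin x) by (apply sin_gt_0; lra).
      assert (Hk : k x = (f x - f 0) / sin x).
      { unfold k, kfun. destruct (Req_EM_T x 0); [lra|reflexivity]. }
      rewrite Hk.
      replace (INR (2 * S j) * x) with (INR (2 * j + 1) * x + x) by (rewrite (INR_2S j); ring).
      replace (INR (2 * j) * x) with (INR (2 * j + 1) * x - x) by (rewrite (INR_2S' j); ring).
      rewrite sin_plus, sin_minus. Rfield. lra. }
  assert (Rm0 : Rm 0%nat = 0).
  { unfold Rm. rewrite (RInt_ext _ (fun _ => 0)). rewrite RInt_const. apply Rmult_0_r.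
    intros x _. simpl. rewrite Rmult_0_l, sin_0. ring. }
  assert (C2 : forall N, sum_n (coef f) N =
     f 0 * sum_n (fun j => (-1)^j / INR (2*j+1)) N + Rm (S N) / 2).
  { induction N.
    - rewrite !sum_O, C1, Rm0. rewrite Rminus_0_r. reflexivity.
    - rewrite !sum_Sn, IHN, C1. change (plus ?x ?y) with (x + y). set (t := (-1) ^ S N / INR (2 * S N + 1)). set (u := sum_n _ N). set (r1 := Rm (S N)). set (r2 := Rm (S (S N))). clearbody u r1 r2 t. change (@eq R (f 0 * u + r1 / 2 + (f 0 * t + (r2 - r1) / 2)) (f 0 * (u + t) + r2 / 2)). assert (forall xx yy : R, xx + yy = yy + xx) by (intros; ring). lra. }
  set (K := Rabs (k 0) + M * a).
  assert (C3 : forall N, Rabs (Rm (S N)) <= ((2 * K + M * a) * PI / 4) * / INR (S N)).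
  { intros N. assert (HN : 0 < INR (S N)) by apply lt_0_INR, Nat.lt_0_succ.
    replace (((2 * K + M * a) * PI / 4) * / INR (S N)) with
       ((2 * K + M * a) * (PI / INR (2 * S N)) / 2)
       by (rewrite mult_INR; simpl INR at 1; field; lra).
    unfold Rm. apply RL_shift.
    - split. apply Rdiv_lt_0_compat; auto. rewrite mult_INR; simpl INR at 1; lra.
      unfold a. rewrite mult_INR. simpl INR at 1. unfold Rdiv.
      apply Rmult_le_compat_l. lra. apply Rinv_le_contravar. lra.
      assert (1 <= INR (S N)) by (apply (le_INR 1); lia). lra.
    - intros s. replace (INR (2 * S N) * (s + PI / INR (2 * S N))) with (INR (2 * S N) * s + PI).
      apply neg_sin. field. rewrite mult_INR; simpl INR at 1; lra.
    - intros s. apply Rabs_le, SIN_bound.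
    - intros s. apply (cont_of_der _ _ s (dR_sin_lin _)).
    - exact Hkc.
    - intros u v Hu Hv. apply HL; unfold a in *; lra.
    - exact HK. }
  assert (Lb : is_lim_seq (fun N => ((2 * K + M * a) * PI / 4) * / INR (S N)) 0).
  { replace (Finite 0) with (Finite (((2 * K + M * a) * PI / 4) * 0)) by (f_equal; ring).
    apply is_lim_seq_mult'. apply is_lim_seq_const. apply inv_S_lim. }
  assert (L1 : is_lim_seq (fun N => Rm (S N)) 0).
  { apply is_lim_seq_le_le with (fun N => - (((2 * K + M * a) * PI / 4) * / INR (S N)))
                                 (fun N => ((2 * K + M * a) * PI / 4) * / INR (S N)).
    - intros N. assert (T := C3 N). revert T. unfold Rabs.
      destruct (Rcase_abs (Rm (S N))); intros; lra.
    - assert (T := proj1 (is_lim_seq_opp _ _) Lb). simpl in T. rewrite Ropp_0 in T. exact T.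
    - exact Lb. }
  apply is_lim_seq_ext with (fun N => 4 / PI * (f 0 * sum_n (fun j => (-1)^j / INR (2*j+1)) N + Rm (S N) / 2)).
  { intros N. rewrite C2. reflexivity. }
  replace (Finite (f 0)) with (Finite (4 / PI * (f 0 * (PI / 4) + 0 / 2))) by (f_equal; field; lra).
  apply is_lim_seq_mult'. apply is_lim_seq_const.
  apply is_lim_seq_plus'. apply is_lim_seq_mult'. apply is_lim_seq_const. apply Leibniz_lim.
  apply is_lim_seq_mult'. exact L1. apply is_lim_seq_const.
Qed.



Definition pf (A B s : R) := cosh (A * s) * cos (B * s).
Definition qf (A B s : R) := sinh (A * s) * sin (B * s).
Definition p1 (A B s : R) := A * sinh (A * s) * cos (B * s) - B * cosh (A * s) * sin (B * s).
Definition q1 (A B s : R) := A * cosh (A * s) * sin (B * s) + B * sinh (A * s) * cos (B * s).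
Definition p2 (A B s : R) := (A^2 - B^2) * pf A B s - 2 * A * B * qf A B s.
Definition q2 (A B s : R) := (A^2 - B^2) * qf A B s + 2 * A * B * pf A B s.

Lemma dR_sinh_lin (c s : R) : is_derive (fun t => sinh (c * t)) s (c * cosh (c * s)).
Proof. apply (dR_lin sinh cosh). apply dR_sinh. Qed.
Lemma dR_cosh_lin (c s : R) : is_derive (fun t => cosh (c * t)) s (c * sinh (c * s)).
Proof. apply (dR_lin cosh sinh). apply dR_cosh. Qed.

Lemma d_pf A B s : is_derive (pf A B) s (p1 A B s).
Proof.
  unfold pf, p1. eapply dR_eq. apply dR_mult. apply dR_cosh_lin. apply dR_cos_lin. Rring.
Qed.
Lemma d_qf A B s : is_derive (qf A B) s (q1 A B s).
Proof.
  unfold qf, q1. eapply dR_eq. apply dR_mult. apply dR_sinh_lin. apply dR_sin_lin. Rring.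
Qed.
Lemma d_p1 A B s : is_derive (p1 A B) s (p2 A B s).
Proof.
  unfold p1, p2, pf, qf. eapply dR_eq. apply dR_minus.
  apply dR_mult. apply (is_derive_scal (fun t => sinh (A * t))). apply dR_sinh_lin. apply dR_cos_lin.
  apply dR_mult. apply (is_derive_scal (fun t => cosh (A * t))). apply dR_cosh_lin. apply dR_sin_lin.
  Rring.
Qed.
Lemma d_q1 A B s : is_derive (q1 A B) s (q2 A B s).
Proof.
  unfold q1, q2, pf, qf. eapply dR_eq. apply dR_plus.
  apply dR_mult. apply (is_derive_scal (fun t => cosh (A * t))). apply dR_cosh_lin. apply dR_sin_lin.
  apply dR_mult. apply (is_derive_scal (fun t => sinh (A * t))). apply dR_sinh_lin. apply dR_cos_lin.
  Rring.
Qed.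

Definition F1 A B n s := p1 A B s * cos (n * s) + n * pf A B s * sin (n * s).
Definition F2 A B n s := q1 A B s * cos (n * s) + n * qf A B s * sin (n * s).

Lemma d_F1 A B n s : is_derive (F1 A B n) s ((p2 A B s + n^2 * pf A B s) * cos (n * s)).
Proof.
  unfold F1. eapply dR_eq. apply dR_plus.
  apply dR_mult. apply d_p1. apply dR_cos_lin.
  apply dR_mult. apply (is_derive_scal (pf A B)). apply d_pf. apply dR_sin_lin.
  Rring.
Qed.
Lemma d_F2 A B n s : is_derive (F2 A B n) s ((q2 A B s + n^2 * qf A B s) * cos (n * s)).
Proof.
  unfold F2. eapply dR_eq. apply dR_plus.
  apply dR_mult. apply d_q1. apply dR_cos_lin.
  apply dR_mult. apply (is_derive_scal (qf A B)). apply d_qf. apply dR_sin_lin.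
  Rring.
Qed.

Definition PP A B n := A^2 - B^2 + n^2.
Definition QQ A B := 2 * A * B.

Definition Gp A B n s := (PP A B n * F1 A B n s + QQ A B * F2 A B n s) / (PP A B n ^ 2 + QQ A B ^ 2).
Definition Gq A B n s := (PP A B n * F2 A B n s - QQ A B * F1 A B n s) / (PP A B n ^ 2 + QQ A B ^ 2).

Lemma d_Gp A B n s : PP A B n ^ 2 + QQ A B ^ 2 <> 0 ->
  is_derive (Gp A B n) s (pf A B s * cos (n * s)).
Proof.
  intros H. unfold Gp. eapply dR_eq.
  apply (is_derive_div (fun t => PP A B n * F1 A B n t + QQ A B * F2 A B n t) (fun _ => PP A B n ^ 2 + QQ A B ^ 2)).
  apply dR_plus. apply (is_derive_scal (F1 A B n)). apply d_F1.
  apply (is_derive_scal (F2 A B n)). apply d_F2. apply dR_const. cbv beta. exact H.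
  change ((((PP A B n * ((p2 A B s + n ^ 2 * pf A B s) * cos (n * s)) +
     QQ A B * ((q2 A B s + n ^ 2 * qf A B s) * cos (n * s))) *
    (PP A B n ^ 2 + QQ A B ^ 2) -
    (PP A B n * F1 A B n s + QQ A B * F2 A B n s) * 0) /
   (PP A B n ^ 2 + QQ A B ^ 2) ^ 2) = pf A B s * cos (n * s)).
  unfold p2, q2, PP, QQ in *. field. auto.
Qed.

Lemma d_Gq A B n s : PP A B n ^ 2 + QQ A B ^ 2 <> 0 ->
  is_derive (Gq A B n) s (qf A B s * cos (n * s)).
Proof.
  intros H. unfold Gq. eapply dR_eq.
  apply (is_derive_div (fun t => PP A B n * F2 A B n t - QQ A B * F1 A B n t) (fun _ => PP A B n ^ 2 + QQ A B ^ 2)).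
  apply dR_minus. apply (is_derive_scal (F2 A B n)). apply d_F2.
  apply (is_derive_scal (F1 A B n)). apply d_F1. apply dR_const. cbv beta. exact H.
  change ((((PP A B n * ((q2 A B s + n ^ 2 * qf A B s) * cos (n * s)) -
     QQ A B * ((p2 A B s + n ^ 2 * pf A B s) * cos (n * s))) *
    (PP A B n ^ 2 + QQ A B ^ 2) -
    (PP A B n * F2 A B n s - QQ A B * F1 A B n s) * 0) /
   (PP A B n ^ 2 + QQ A B ^ 2) ^ 2) = qf A B s * cos (n * s)).
  unfold p2, q2, PP, QQ in *. field. auto.
Qed.

Lemma F1_0 A B n : F1 A B n 0 = 0.
Proof. unfold F1, p1, pf. rewrite !Rmult_0_r, sin_0, sinh_0. ring. Qed.
Lemma F2_0 A B n : F2 A B n 0 = 0.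
Proof. unfold F2, q1, qf. rewrite !Rmult_0_r, sin_0, sinh_0. ring. Qed.
Lemma F1_half A B j : F1 A B (INR (2*j+1)) (PI/2) = INR (2*j+1) * (-1)^j * pf A B (PI/2).
Proof. unfold F1. rewrite cos_odd_half, sin_odd_half. ring. Qed.
Lemma F2_half A B j : F2 A B (INR (2*j+1)) (PI/2) = INR (2*j+1) * (-1)^j * qf A B (PI/2).
Proof. unfold F2. rewrite cos_odd_half, sin_odd_half. ring. Qed.

Lemma coef_pf A B j : PP A B (INR (2*j+1)) ^ 2 + QQ A B ^ 2 <> 0 ->
  coef (pf A B) j = INR (2*j+1) * (-1)^j *
    (PP A B (INR (2*j+1)) * pf A B (PI/2) + QQ A B * qf A B (PI/2)) /
    (PP A B (INR (2*j+1)) ^ 2 + QQ A B ^ 2).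
Proof.
  intros H. unfold coef.
  apply (@is_RInt_unique R_CompleteNormedModule).
  assert (T := is_RInt_derive (Gp A B (INR (2*j+1))) (fun s => pf A B s * cos (INR (2 * j + 1) * s)) 0 (PI/2)).
  match goal with |- is_RInt _ _ _ ?v => replace v with (minus (Gp A B (INR (2*j+1)) (PI/2)) (Gp A B (INR (2*j+1)) 0)) end.
  apply T.
  - intros x _. apply d_Gp. exact H.
  - intros x _. apply cR_mult. apply (cont_of_der _ _ x (d_pf A B)).
    apply (cont_of_der _ _ x (dR_cos_lin _)).
  - change (Gp A B (INR (2 * j + 1)) (PI / 2) - Gp A B (INR (2 * j + 1)) 0 =
      INR (2 * j + 1) * (-1) ^ j * (PP A B (INR (2 * j + 1)) * pf A B (PI / 2) + QQ A B * qf A B (PI / 2)) /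
      (PP A B (INR (2 * j + 1)) ^ 2 + QQ A B ^ 2)).
    unfold Gp. rewrite F1_0, F2_0, F1_half, F2_half. field. exact H.
Qed.

Lemma coef_qf A B j : PP A B (INR (2*j+1)) ^ 2 + QQ A B ^ 2 <> 0 ->
  coef (qf A B) j = INR (2*j+1) * (-1)^j *
    (PP A B (INR (2*j+1)) * qf A B (PI/2) - QQ A B * pf A B (PI/2)) /
    (PP A B (INR (2*j+1)) ^ 2 + QQ A B ^ 2).
Proof.
  intros H. unfold coef.
  apply (@is_RInt_unique R_CompleteNormedModule).
  assert (T := is_RInt_derive (Gq A B (INR (2*j+1))) (fun s => qf A B s * cos (INR (2 * j + 1) * s)) 0 (PI/2)).
  match goal with |- is_RInt _ _ _ ?v => replace v with (minus (Gq A B (INR (2*j+1)) (PI/2)) (Gq A B (INR (2*j+1)) 0)) end.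
  apply T.
  - intros x _. apply d_Gq. exact H.
  - intros x _. apply cR_mult. apply (cont_of_der _ _ x (d_qf A B)).
    apply (cont_of_der _ _ x (dR_cos_lin _)).
  - change (Gq A B (INR (2 * j + 1)) (PI / 2) - Gq A B (INR (2 * j + 1)) 0 =
      INR (2 * j + 1) * (-1) ^ j * (PP A B (INR (2 * j + 1)) * qf A B (PI / 2) - QQ A B * pf A B (PI / 2)) /
      (PP A B (INR (2 * j + 1)) ^ 2 + QQ A B ^ 2)).
    unfold Gq. rewrite F1_0, F2_0, F1_half, F2_half. field. exact H.
Qed.


Lemma chi_odd j : chi (S (2*j)) = (-1)^j.
Proof.
  destruct (Nat.Even_or_Odd j) as [[q Hq]|[q Hq]]; subst j; unfold chi.
  - replace (S (2 * (2 * q)) mod 4)%nat with 1%nat by (apply Nat.mod_unique with q; lia).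
    rewrite pow_1_even. reflexivity.
  - replace (S (2 * (2 * q + 1)) mod 4)%nat with 3%nat by (apply Nat.mod_unique with q; lia).
    replace (2 * q + 1)%nat with (S (2 * q)) by lia. rewrite pow_1_odd. reflexivity.
Qed.
Lemma chi_even j : chi (S (S (2*j))) = 0.
Proof.
  destruct (Nat.Even_or_Odd j) as [[q Hq]|[q Hq]]; subst j; unfold chi.
  - replace (S (S (2 * (2 * q))) mod 4)%nat with 2%nat by (apply Nat.mod_unique with q; lia). reflexivity.
  - replace (S (S (2 * (2 * q + 1))) mod 4)%nat with 0%nat by (apply Nat.mod_unique with (S q); lia). reflexivity.
Qed.

Lemma series_odd (a w : nat -> R) (L : R) :
  (forall j, a (2*j)%nat = w j) -> (forall j, a (S (2*j))%nat = 0) ->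
  is_lim_seq (sum_n w) L -> is_series a L.
Proof.
  intros Hw H0 HL.
  assert (E : forall j, sum_n a (2*j) = sum_n w j /\ sum_n a (S (2*j)) = sum_n w j).
  { induction j.
    - assert (Ha1 : a 1%nat = 0) by exact (H0 0%nat).
      assert (Ha0 : a 0%nat = w 0%nat) by exact (Hw 0%nat).
      split. change (sum_n a 0 = sum_n w 0). rewrite !sum_O. exact Ha0.
      change (sum_n a 1 = sum_n w 0). rewrite sum_Sn, !sum_O.
      change (a 0%nat + a 1%nat = w 0%nat). rewrite Ha1, Ha0. ring.
    - destruct IHj as [_ IH2].
      assert (F1 : sum_n a (2 * S j) = sum_n w (S j)).
      { replace (2 * S j)%nat with (S (S (2 * j))) by lia.
        rewrite sum_Sn, IH2, sum_Sn. f_equal.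
        replace (S (S (2 * j))) with (2 * S j)%nat by lia. apply Hw. }
      split. exact F1.
      rewrite sum_Sn, H0, F1. change (sum_n w (S j) + 0 = sum_n w (S j)). ring. }
  assert (E2 : forall M, sum_n a M = sum_n w (Nat.div2 M)).
  { intros M. destruct (Nat.Even_or_Odd M) as [[q Hq]|[q Hq]]; subst M.
    - rewrite Nat.div2_double. apply E.
    - replace (2 * q + 1)%nat with (S (2 * q)) by lia. rewrite Nat.div2_succ_double. apply E. }
  change (is_lim_seq (sum_n a) L).
  apply (is_lim_seq_ext (fun M => sum_n w (Nat.div2 M))). intros M; rewrite E2; reflexivity.
  apply (is_lim_seq_subseq (sum_n w) L Nat.div2); auto.
  intros P [N HN]. exists (2 * N)%nat. intros n Hn. apply HN.
  assert (T := Nat.div2_odd n). destruct (Nat.odd n); simpl in T; lia.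
Qed.

Lemma lin_comb_lim (cp cq u : nat -> R) (al be Lp Lq : R) :
  (forall j, u j = al * cp j + be * cq j) ->
  is_lim_seq (sum_n cp) Lp -> is_lim_seq (sum_n cq) Lq ->
  is_lim_seq (sum_n u) (al * Lp + be * Lq).
Proof.
  intros Hu Hp Hq.
  apply (is_lim_seq_ext (fun N => al * sum_n cp N + be * sum_n cq N)).
  { induction n. rewrite !sum_O, Hu. reflexivity.
    rewrite !sum_Sn, <- IHn, Hu. change (al * (sum_n cp n + cp (S n)) + be * (sum_n cq n + cq (S n)) =
      al * sum_n cp n + be * sum_n cq n + (al * cp (S n) + be * cq (S n))). ring. }
  apply is_lim_seq_plus'; apply is_lim_seq_mult'; auto; apply is_lim_seq_const.
Qed.

Lemma unscale (cp : nat -> R) (L : R) :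
  is_lim_seq (fun N => 4 / PI * sum_n cp N) L -> is_lim_seq (sum_n cp) (PI / 4 * L).
Proof.
  intros H. assert (Hpi := PI_RGT_0).
  apply (is_lim_seq_ext (fun N => PI / 4 * (4 / PI * sum_n cp N))).
  intros N. field. lra.
  apply is_lim_seq_mult'. apply is_lim_seq_const. exact H.
Qed.

Lemma cosh_sinh_sq x : cosh x ^ 2 - sinh x ^ 2 = 1.
Proof.
  assert (H : exp x * exp (- x) = 1) by (rewrite <- exp_plus, Rplus_opp_r; apply exp_0).
  unfold cosh, sinh. rewrite <- H. field.
Qed.

Lemma sinh_pos x : 0 < x -> 0 < sinh x.
Proof.
  intros H. unfold sinh. assert (exp (- x) < exp x) by (apply exp_increasing; lra). lra.
Qed.

Lemma INR_S2 j : INR (S (2 * j)) = INR (2 * j + 1).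
Proof. f_equal. lia. Qed.
Lemma INR_S2' j : INR (S (S (2 * j))) = INR (2 * j + 1) + 1.
Proof. rewrite S_INR, INR_S2. reflexivity. Qed.

Lemma cont_p2 A B x : continuous (p2 A B) x.
Proof.
  unfold p2. apply cR_minus; apply cR_mult; try apply continuous_const.
  apply (cont_of_der _ _ x (d_pf A B)). apply (cont_of_der _ _ x (d_qf A B)).
Qed.
Lemma cont_q2 A B x : continuous (q2 A B) x.
Proof.
  unfold q2. apply cR_plus; apply cR_mult; try apply continuous_const.
  apply (cont_of_der _ _ x (d_qf A B)). apply (cont_of_der _ _ x (d_pf A B)).
Qed.

Theorem lemma2p1 (b c : R) (hb : 0 < b) (hc : 0 < c) :
  is_series
    (fun n : nat => chi (S n) * INR (S n) /
       ((INR (S n) ^ 2 + b ^ 2) ^ 2 + c ^ 2))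
    (PI / (4 * c) *
     (sinh (PI / 2 * Abc b c) * sin (PI / 2 * Bbc b c) /
      (sinh (PI / 2 * Abc b c) ^ 2 + cos (PI / 2 * Bbc b c) ^ 2)))
  /\
  is_series
    (fun n : nat => chi (S n) * INR (S n) * (INR (S n) ^ 2 + b ^ 2) /
       ((INR (S n) ^ 2 + b ^ 2) ^ 2 + c ^ 2))
    (PI / 4 *
     (cosh (PI / 2 * Abc b c) * cos (PI / 2 * Bbc b c) /
      (cosh (PI / 2 * Abc b c) ^ 2 - sin (PI / 2 * Bbc b c) ^ 2))).
Proof.
  assert (Hpi := PI_RGT_0).
  set (A := Abc b c). set (B := Bbc b c).
  set (s := sqrt (b ^ 4 + c ^ 2)).
  assert (Hs0 : 0 <= s) by apply sqrt_pos.
  assert (Hs2 : s * s = b ^ 4 + c ^ 2) by (apply sqrt_sqrt; nra).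
  assert (Hsb : b ^ 2 < s) by nra.
  assert (HA2 : A * A = (s + b ^ 2) / 2) by (apply sqrt_sqrt; nra).
  assert (HB2 : B * B = (s - b ^ 2) / 2) by (apply sqrt_sqrt; nra).
  assert (HA0 : 0 <= A) by apply sqrt_pos.
  assert (HB0 : 0 <= B) by apply sqrt_pos.
  assert (HA : 0 < A) by nra.
  assert (HAB : A * B = c / 2).
  { assert (T : (A * B) * (A * B) = (c / 2) * (c / 2)).
    { replace ((A * B) * (A * B)) with ((A * A) * (B * B)) by ring. rewrite HA2, HB2. nra. }
    assert (0 <= A * B) by nra. nra. }
  assert (HPP : forall n, PP A B n = n ^ 2 + b ^ 2) by (intros n; unfold PP; nra).
  assert (HQQ : QQ A B = c) by (unfold QQ; nra).
  set (pa := pf A B (PI / 2)). set (qa := qf A B (PI / 2)).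
  set (x := PI / 2 * A). set (y := PI / 2 * B).
  assert (Hpa : pa = cosh x * cos y) by (unfold pa, pf, x, y; rewrite (Rmult_comm A), (Rmult_comm B); reflexivity).
  assert (Hqa : qa = sinh x * sin y) by (unfold qa, qf, x, y; rewrite (Rmult_comm A), (Rmult_comm B); reflexivity).
  set (W := pa ^ 2 + qa ^ 2).
  assert (Hch := cosh_sinh_sq x). assert (Hsc := sin2_cos2 y). unfold Rsqr in Hsc.
  assert (HW1 : W = sinh x ^ 2 + cos y ^ 2) by (unfold W; rewrite Hpa, Hqa; nra).
  assert (HW2 : W = cosh x ^ 2 - sin y ^ 2) by (unfold W; rewrite Hpa, Hqa; nra).
  assert (Hx : 0 < sinh x) by (apply sinh_pos; unfold x; nra).
  assert (HW : 0 < W) by nra.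
  assert (HW' : 0 < pa ^ 2 + qa ^ 2) by exact HW.
  set (D := fun j : nat => (INR (2 * j + 1) ^ 2 + b ^ 2) ^ 2 + c ^ 2).
  assert (HD : forall j, 0 < D j) by (intros j; unfold D; nra).
  assert (HDn : forall j, PP A B (INR (2 * j + 1)) ^ 2 + QQ A B ^ 2 <> 0).
  { intros j. rewrite HPP, HQQ. apply Rgt_not_eq, (HD j). }
  assert (Kp := mainK (pf A B) (p1 A B) (p2 A B) (d_pf A B) (d_p1 A B) (cont_p2 A B)).
  assert (Kq := mainK (qf A B) (q1 A B) (q2 A B) (d_qf A B) (d_q1 A B) (cont_q2 A B)).
  apply unscale in Kp. apply unscale in Kq.
  assert (Hp0 : pf A B 0 = 1) by (unfold pf; rewrite !Rmult_0_r, cos_0; unfold cosh; rewrite Ropp_0, exp_0; field).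
  assert (Hq0 : qf A B 0 = 0) by (unfold qf; rewrite !Rmult_0_r, sin_0; ring).
  rewrite Hp0 in Kp. rewrite Hq0 in Kq.
  split.
  - set (v := fun j : nat => INR (2 * j + 1) * (-1) ^ j / D j).
    assert (Ev : forall j, v j = qa / (c * W) * coef (pf A B) j + - (pa / (c * W)) * coef (qf A B) j).
    { intros j; unfold v; rewrite coef_pf, coef_qf, HPP, HQQ by apply HDn.
      unfold D, W. fold pa qa. set (nn := INR (2 * j + 1)). set (tt := (-1) ^ j).
      assert (0 < (nn ^ 2 + b ^ 2) ^ 2 + c ^ 2) by nra.
      Rfield. repeat split; nra. }
    assert (Lv := lin_comb_lim (coef (pf A B)) (coef (qf A B)) v (qa / (c * W)) (- (pa / (c * W))) _ _ Ev Kp Kq).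
    apply (series_odd _ v).
    + intros j. unfold v, D. rewrite chi_odd, INR_S2. set (tt := (-1) ^ j). unfold Rdiv. ring.
    + intros j. rewrite chi_even. unfold Rdiv. ring.
    + replace (PI / (4 * c) * (sinh x * sin y / (sinh x ^ 2 + cos y ^ 2)))
        with (qa / (c * W) * (PI / 4 * 1) + - (pa / (c * W)) * (PI / 4 * 0)).
      exact Lv. rewrite <- HW1, Hqa. field. split; lra.
  - set (u := fun j : nat => INR (2 * j + 1) * (-1) ^ j * (INR (2 * j + 1) ^ 2 + b ^ 2) / D j).
    assert (Eu : forall j, u j = pa / W * coef (pf A B) j + qa / W * coef (qf A B) j).
    { intros j; unfold u; rewrite coef_pf, coef_qf, HPP, HQQ by apply HDn.
      unfold D, W. fold pa qa. set (nn := INR (2 * j + 1)). set (tt := (-1) ^ j).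
      assert (0 < (nn ^ 2 + b ^ 2) ^ 2 + c ^ 2) by nra.
      Rfield. repeat split; nra. }
    assert (Lu := lin_comb_lim (coef (pf A B)) (coef (qf A B)) u (pa / W) (qa / W) _ _ Eu Kp Kq).
    apply (series_odd _ u).
    + intros j. unfold u, D. rewrite chi_odd, INR_S2. set (tt := (-1) ^ j). unfold Rdiv. ring.
    + intros j. rewrite chi_even. unfold Rdiv. ring.
    + replace (PI / 4 * (cosh x * cos y / (cosh x ^ 2 - sin y ^ 2)))
        with (pa / W * (PI / 4 * 1) + qa / W * (PI / 4 * 0)).
      exact Lu. rewrite <- HW2, Hpa. field. lra.
Qed.
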